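(* Let $\lambda\neq0$ be a constant and let $\phi(x,t)$ be a smooth function with $\phi_x\neq0$ satisfying $\{\phi;x\}_t+\frac4\lambda\big(\frac{\phi_t}{\phi_x}\big)_x=0$. Let $p=\frac{\phi_t}{\lambda\phi_x}$, $U=\frac12\{\phi;x\}+\frac1\lambda$, let $A,B$ be constants not both zero, and let $V=\frac{A\phi+B}{\sqrt{\phi_x}}$ on a region where $A\phi+B\neq0$. Define $$\widetilde U=U+2(\log V)_{xx},\qquad \widetilde p=\frac{\phi_t}{\lambda\phi_x}-\Big(\log\frac{A\phi+B}{\sqrt{\phi_x}}\Big)_{xt}.$$ Then $1/V$ solves the system $$W_{xx}+\Big(\widetilde U-\frac1\lambda\Big)W=0,\qquad W_t=\lambda\Big(\widetilde pW_x-\frac12\widetilde p_xW\Big).$$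
   Context: The Schwarzian derivative of a function $\phi(x,t)$ with $\phi_x\neq0$ is $\{\phi;x\}=\frac{\phi_{xxx}}{\phi_x}-\frac32\frac{\phi_{xx}^2}{\phi_x^2}$. All functions are smooth. *)

(* Defs.v *)
From Stdlib Require Import Reals List.
From Coquelicot Require Import Coquelicot.
Open Scope R_scope.

Definition pDx (f : R -> R -> R) : R -> R -> R :=
  fun x t => Derive (fun y => f y t) x.
Definition pDt (f : R -> R -> R) : R -> R -> R :=
  fun x t => Derive (fun s => f x s) t.

(* Iterated partial derivative along a word: true = d/dx, false = d/dt. *)
Fixpoint pdiff (w : list bool) (f : R -> R -> R) : R -> R -> R :=
  match w with
  | nil => f
  | b :: w' => (if b then pDx else pDt) (pdiff w' f)
  end.

Definition smooth_on (D : R * R -> Prop) (f : R -> R -> R) : Prop :=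
  forall (w : list bool) (x t : R), D (x, t) ->
    ex_derive (fun y => pdiff w f y t) x /\
    ex_derive (fun s => pdiff w f x s) t /\
    continuous (fun z : R * R => pdiff w f (fst z) (snd z)) (x, t).

Definition schwarzian (phi : R -> R -> R) : R -> R -> R :=
  fun x t => pDx (pDx (pDx phi)) x t / pDx phi x t
             - 3 / 2 * (pDx (pDx phi) x t / pDx phi x t) ^ 2.

(* Main.v *)
Require Import Defs.
From Stdlib Require Import Reals Lra List.
From Coquelicot Require Import Coquelicot.
Import ListNotations.
Open Scope R_scope.

Lemma pDx_is (F : R -> R -> R) y s e : is_derive (fun z => F z s) y e -> pDx F y s = e.
Proof. intros H; unfold pDx; now apply is_derive_unique. Qed.
Lemma pDt_is (F : R -> R -> R) y s e : is_derive (fun z => F y z) s e -> pDt F y s = e.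
Proof. intros H; unfold pDt; now apply is_derive_unique. Qed.

Lemma pdiff_app w1 w2 f : pdiff w1 (pdiff w2 f) = pdiff (w1 ++ w2) f.
Proof. induction w1 as [|b w1 IH]; simpl; [reflexivity| now rewrite IH]. Qed.

Lemma smooth_pdiff D f w : smooth_on D f -> smooth_on D (pdiff w f).
Proof. intros H w' x t Hd. rewrite pdiff_app. now apply H. Qed.

Lemma Dloc2 (D : R * R -> Prop) x t : open D -> D (x,t) ->
  locally_2d (fun u v => D (u,v)) x t.
Proof.
  intros HD Hx. apply locally_2d_locally. specialize (HD _ Hx).
  eapply filter_imp; [|exact HD]. intros [u v]; simpl; auto.
Qed.

Lemma pDx_ext (D : R * R -> Prop) (F G : R -> R -> R) x t : open D -> D (x,t) ->
  (forall y, D (y,t) -> F y t = G y t) -> pDx F x t = pDx G x t.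
Proof.
  intros HD Hx H. unfold pDx. apply Derive_ext_loc.
  eapply filter_imp; [|apply (locally_2d_1d_const_y _ _ _ (Dloc2 D x t HD Hx))].
  simpl; auto.
Qed.

Lemma pDt_ext (D : R * R -> Prop) (F G : R -> R -> R) x t : open D -> D (x,t) ->
  (forall s, D (x,s) -> F x s = G x s) -> pDt F x t = pDt G x t.
Proof.
  intros HD Hx H. unfold pDt. apply Derive_ext_loc.
  eapply filter_imp; [|apply (locally_2d_1d_const_x _ _ _ (Dloc2 D x t HD Hx))].
  simpl; auto.
Qed.

Lemma schwarz_pd (D : R * R -> Prop) g x t : open D -> smooth_on D g -> D (x,t) ->
  pDx (pDt g) x t = pDt (pDx g) x t.
Proof.
  intros HD Hs Hx. unfold pDx, pDt.
  apply Schwarz.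
  - destruct (Dloc2 D x t HD Hx) as [d Hd]. exists d. intros u v Hu Hv.
    specialize (Hd u v Hu Hv).
    repeat split.
    + exact (proj1 (Hs nil u v Hd)).
    + exact (proj1 (proj2 (Hs nil u v Hd))).
    + exact (proj1 (Hs [false] u v Hd)).
    + exact (proj1 (proj2 (Hs [true] u v Hd))).
  - apply continuity_2d_pt_filterlim. exact (proj2 (proj2 (Hs [true;false] x t Hx))).
  - apply continuity_2d_pt_filterlim. exact (proj2 (proj2 (Hs [false;true] x t Hx))).
Qed.

Lemma Rabs_sg h : Rabs h = sign h * h.
Proof.
  destruct (Rtotal_order h 0) as [H|[H|H]].
  - rewrite Rabs_left, sign_eq_m1 by lra. ring.
  - subst. rewrite sign_0, Rabs_R0. ring.
  - rewrite Rabs_pos_eq, sign_eq_1 by lra. ring.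
Qed.

Lemma exdx (D : R * R -> Prop) f y s : smooth_on D f -> D (y,s) -> ex_derive (fun z => f z s) y.
Proof. intros H Hd. exact (proj1 (H nil y s Hd)). Qed.
Lemma exdt (D : R * R -> Prop) f y s : smooth_on D f -> D (y,s) -> ex_derive (fun z => f y z) s.
Proof. intros H Hd. exact (proj1 (proj2 (H nil y s Hd))). Qed.

Ltac fold_d := repeat match goal with
 | |- context [Derive (fun z => ?F z ?s) ?y] => change (Derive (fun z => F z s) y) with (pDx F y s)
 | |- context [Derive (fun z => ?F ?y z) ?s] => change (Derive (fun z => F y z) s) with (pDt F y s)
 end.

Definition Wx A B phi y s := sqrt (Rabs (pDx phi y s)) / (A * phi y s + B) *
  (pDx (pDx phi) y s / (2 * pDx phi y s) - A * pDx phi y s / (A * phi y s + B)).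
Definition L1 A B phi y s := A * pDx phi y s / (A * phi y s + B) - pDx (pDx phi) y s / (2 * pDx phi y s).
Definition Lt A B phi y s := A * pDt (pDx phi) y s / (A*phi y s + B)
  - A * pDx phi y s * (A * pDt phi y s) / (A*phi y s+B)^2
  - pDt (pDx (pDx phi)) y s / (2 * pDx phi y s)
  + pDx (pDx phi) y s * pDt (pDx phi) y s / (2 * (pDx phi y s)^2).
Ltac nz := match goal with
 | |- ?a * ?b <> 0 => apply Rmult_integral_contrapositive_currified; nz
 | |- / ?a <> 0 => apply Rinv_neq_0_compat; nz
 | |- ?a / ?b <> 0 => unfold Rdiv; nz
 | |- sqrt ?a <> 0 => apply Rgt_not_eq, sqrt_lt_R0; nz
 | |- 0 < Rabs ?a => apply Rabs_pos_lt; nz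
 | |- sign ?a <> 0 => apply sign_neq_0; nz
 | |- ?a ^ _ <> 0 => apply pow_nonzero; nz
 | |- True => exact I
 | _ => first [assumption | solve [eauto] | lra ]
 end.

Ltac word F := match F with
 | pDx ?G => let w := word G in constr:(true :: w)
 | pDt ?G => let w := word G in constr:(false :: w)
 | _ => constr:(@nil bool) end.

Ltac exd Hsw := match goal with
 | |- ex_derive (fun z => ?F z ?s) ?y =>
     let w := word F in apply (exdx _ F y s (Hsw w)); assumption
 | |- ex_derive (fun z => ?F ?y z) ?s =>
     let w := word F in apply (exdt _ F y s (Hsw w)); assumption
 end.

Ltac side Hsw := repeat split; first [exd Hsw | nz].

Ltac sgfield u :=
  let sq := fresh "sq" in
  let Hsq := fresh "Hsq" in
  let Hp := fresh "Hp" in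
  let Hq := fresh "Hq" in
  let Hs0 := fresh "Hs0" in
  assert (Hq : u <> 0) by nz;
  destruct (Rlt_or_le 0 u) as [Hp|Hp];
  [ rewrite ?(sign_eq_1 u Hp), ?(Rabs_pos_eq u (Rlt_le _ _ Hp));
    assert (Hsq : sqrt u * sqrt u = u) by (apply sqrt_sqrt; lra);
    assert (Hs0 : 0 < sqrt u) by (apply sqrt_lt_R0; lra);
    set (sq := sqrt u) in *;
    rewrite ?Rabs_sg; rewrite <- Hsq
  | let Hp' := fresh in assert (Hp' : u < 0) by lra;
    rewrite ?(sign_eq_m1 u Hp'), ?(Rabs_left u Hp');
    assert (Hsq : u = -(sqrt (-u) * sqrt (-u))) by (rewrite sqrt_sqrt; lra);
    assert (Hs0 : 0 < sqrt (-u)) by (apply sqrt_lt_R0; lra);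
    set (sq := sqrt (-u)) in *;
    rewrite ?Rabs_sg; rewrite Hsq ];
  field; repeat split; nz.

Theorem mainTheorem7
  (lambda A B : R) (phi : R -> R -> R) (D : R * R -> Prop) :
  lambda <> 0 ->
  open D ->
  smooth_on D phi ->
  (forall x t, D (x, t) -> pDx phi x t <> 0) ->
  (forall x t, D (x, t) ->
     pDt (schwarzian phi) x t
     + 4 / lambda * pDx (fun x' t' => pDt phi x' t' / pDx phi x' t') x t = 0) ->
  ~ (A = 0 /\ B = 0) ->
  (forall x t, D (x, t) -> A * phi x t + B <> 0) ->
  let p := fun x t => pDt phi x t / (lambda * pDx phi x t) in
  let U := fun x t => / 2 * schwarzian phi x t + / lambda in
  let V := fun x t => (A * phi x t + B) / sqrt (Rabs (pDx phi x t)) in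
  let Ut := fun x t => U x t + 2 * pDx (pDx (fun x' t' => ln (Rabs (V x' t')))) x t in
  let pt := fun x t => p x t
              - pDt (pDx (fun x' t' =>
                   ln (Rabs ((A * phi x' t' + B) / sqrt (Rabs (pDx phi x' t')))))) x t in
  let W := fun x t => / V x t in
  forall x t, D (x, t) ->
    pDx (pDx W) x t + (Ut x t - / lambda) * W x t = 0 /\
    pDt W x t = lambda * (pt x t * pDx W x t - / 2 * pDx pt x t * W x t).
Proof.
  intros hl HD Hs Hu Hpde HAB Hg p U V Ut pt W x t Hxt.
  subst p U V Ut pt W. cbv beta.
  assert (Hsw : forall w, smooth_on D (pdiff w phi)) by (intros; now apply smooth_pdiff).
  assert (C1 : forall y s, D (y,s) ->
    pDx (fun x t => / ((A * phi x t + B) / sqrt (Rabs (pDx phi x t)))) y s = Wx A B phi y s).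
  { intros y s Hys. apply pDx_is. unfold Wx. auto_derive; [side Hsw|].
    fold_d. sgfield (pDx phi y s). }
  assert (C3 : forall y s, D (y,s) ->
    pDx (fun x' t' => ln (Rabs ((A * phi x' t' + B) / sqrt (Rabs (pDx phi x' t'))))) y s
      = L1 A B phi y s).
  { intros y s Hys. apply pDx_is. unfold L1. auto_derive; [side Hsw|].
    fold_d. sgfield (pDx phi y s). }
  assert (C6 : forall y s, D (y,s) ->
    pDt (pDx (fun x' t' => ln (Rabs ((A * phi x' t' + B) / sqrt (Rabs (pDx phi x' t')))))) y s
      = Lt A B phi y s).
  { intros y s Hys. rewrite (pDt_ext D _ _ y s HD Hys (fun s' H => C3 y s' H)).
    apply pDt_is. unfold L1, Lt. auto_derive; [side Hsw|].
    fold_d. field. repeat split; nz. }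
  assert (S0 := schwarz_pd D phi x t HD Hs Hxt).
  assert (S1 := schwarz_pd D (pDx phi) x t HD (Hsw [true]) Hxt).
  assert (S2 := schwarz_pd D (pDx (pDx phi)) x t HD (Hsw [true;true]) Hxt).
  split.
  - rewrite (pDx_ext D _ _ x t HD Hxt (fun y H => C1 y t H)).
    rewrite (pDx_ext D _ _ x t HD Hxt (fun y H => C3 y t H)).
    erewrite (pDx_is (Wx A B phi) x t).
    2:{ unfold Wx; auto_derive; [side Hsw | reflexivity]. }
    erewrite (pDx_is (L1 A B phi) x t).
    2:{ unfold L1; auto_derive; [side Hsw | reflexivity]. }
    unfold schwarzian. fold_d.
    Time sgfield (pDx phi x t).
  - match goal with |- pDt ?F x t = _ => erewrite (pDt_is F x t) end.
    2:{ auto_derive; [side Hsw | reflexivity]. }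
    rewrite (C6 x t Hxt), (C1 x t Hxt).
    match goal with |- context [pDx ?F x t] =>
      let H := fresh in
      assert (H: forall y, D (y,t) -> F y t = pDt phi y t / (lambda * pDx phi y t) - Lt A B phi y t)
        by (intros y Hy; cbv beta; rewrite (C6 y t Hy); reflexivity);
      rewrite (pDx_ext D F (fun y s => pDt phi y s / (lambda * pDx phi y s) - Lt A B phi y s) x t HD Hxt H)
    end.
    erewrite (pDx_is (fun y s => pDt phi y s / (lambda * pDx phi y s) - Lt A B phi y s) x t).
    2:{ unfold Lt; auto_derive; [side Hsw | reflexivity]. }
    apply Rminus_diag_uniq.
    transitivity (/ ((A * phi x t + B) / sqrt (Rabs (pDx phi x t))) * (lambda / 4) *
      (pDt (schwarzian phi) x t
     + 4 / lambda * pDx (fun x' t' => pDt phi x' t' / pDx phi x' t') x t)).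
    2:{ rewrite (Hpde x t Hxt); ring. }
    erewrite (pDt_is (schwarzian phi) x t).
    2:{ unfold schwarzian; auto_derive; [side Hsw | reflexivity]. }
    erewrite (pDx_is (fun x' t' => pDt phi x' t' / pDx phi x' t') x t).
    2:{ auto_derive; [side Hsw | reflexivity]. }
    fold_d. rewrite ?S0, ?S1, ?S2. unfold Wx, Lt.
    Time sgfield (pDx phi x t).
Qed.
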